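(* Let $n\ge 3$ and let $K_{1,n}^\sigma=(K_{1,n},\sigma)$ be a signed star that is non-homogeneous (it has at least one positive and at least one negative edge). Then $\dim(K_{1,n}^\sigma)=n-2$.
   Context: A signed graph $\Sigma=(G,\sigma)$ consists of a finite simple connected graph $G=(V,E)$ and a signature $\sigma:E\to\{+1,-1\}$; it is homogeneous if all edges have the same sign and non-homogeneous otherwise. For vertices $u,v$, $d(u,v)$ denotes the usual distance in $G$; the sign of a path $P$ is $\sigma(P)=\prod_{e\in P}\sigma(e)$. Set $\sigma_{\max}(uv)=-1$ if every shortest $u$–$v$ path has sign $-1$, and $\sigma_{\max}(uv)=+1$ otherwise; set $\sigma_{\min}(uv)=+1$ if every shortest $u$–$v$ path has sign $+1$, and $\sigma_{\min}(uv)=-1$ otherwise. $\Sigma$ is (distance) compatible if $\sigma_{\max}(uv)d(u,v)=\sigma_{\min}(uv)d(u,v)$ for all vertices $u,v$ (trees are always compatible); in that case the signed distance is $d_\Sigma(u,v)=\sigma_{\max}(uv)\,d(u,v)$. For a compatible $\Sigma$ and an ordered subset $W=(w_1,\dots,w_k)$ of $V$, the metric representation of $v\in V$ is $r_\Sigma(v|W)=(d_\Sigma(v,w_1),\dots,d_\Sigma(v,w_k))$. $W$ is a resolving set of $\Sigma$ if $r_\Sigma(u|W)\neq r_\Sigma(v|W)$ for all distinct $u,v\in V$; a basis is a resolving set of minimum cardinality, and that cardinality is the metric dimension $\dim(\Sigma)$. *)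

(* Defs.v *)
From mathcomp Require Import all_boot all_order all_algebra.
Set Implicit Arguments. Unset Strict Implicit. Unset Printing Implicit Defensive.
Import GRing.Theory Num.Theory.
Local Open Scope ring_scope.

(* A (finite, simple) graph on a finType T is given by a symmetric irreflexive
   adjacency relation e; a signature is a function sg : T -> T -> int giving the
   sign (+1 / -1) of the edge {u,v} (only its values on edges matter). *)

Definition is_walk {T : finType} (e : rel T) (x y : T) (p : seq T) : bool :=
  path e x p && (last x p == y).

(* Distance: least k such that a walk of length k from x to y exists
   (for connected graphs such a k < #|T| exists; default #|T| otherwise). *)
Definition gdist {T : finType} (e : rel T) (x y : T) : nat :=
  find (fun k => [exists p : k.-tuple T, is_walk e x y p]) (iota 0 #|T|).

Definition walk_sign {T : finType} (sg : T -> T -> int) (x : T) (p : seq T) : int :=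
  \prod_(pr <- zip (x :: p) p) sg pr.1 pr.2.

(* Shortest x--y paths are exactly the walks of length gdist e x y. *)
Definition sigma_max {T : finType} (e : rel T) (sg : T -> T -> int) (u v : T) : int :=
  if [forall p : (gdist e u v).-tuple T, is_walk e u v p ==> (walk_sign sg u p == -1)]
  then -1 else 1.

Definition sigma_min {T : finType} (e : rel T) (sg : T -> T -> int) (u v : T) : int :=
  if [forall p : (gdist e u v).-tuple T, is_walk e u v p ==> (walk_sign sg u p == 1)]
  then 1 else -1.

Definition compatible {T : finType} (e : rel T) (sg : T -> T -> int) : Prop :=
  forall u v : T, sigma_max e sg u v * (gdist e u v)%:Z = sigma_min e sg u v * (gdist e u v)%:Z.

(* Signed distance (meaningful for compatible signed graphs). *)
Definition signed_dist {T : finType} (e : rel T) (sg : T -> T -> int) (u v : T) : int :=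
  sigma_max e sg u v * (gdist e u v)%:Z.

Definition metric_rep {T : finType} (e : rel T) (sg : T -> T -> int) (v : T) (W : seq T)
  : seq int := [seq signed_dist e sg v w | w <- W].

(* W (an ordered subset of V, i.e. a duplicate-free sequence) is resolving. *)
Definition resolving {T : finType} (e : rel T) (sg : T -> T -> int) (W : seq T) : Prop :=
  uniq W /\ forall u v : T, u != v -> metric_rep e sg u W <> metric_rep e sg v W.

Definition is_metric_dim {T : finType} (e : rel T) (sg : T -> T -> int) (k : nat) : Prop :=
  (exists W : seq T, resolving e sg W /\ size W = k) /\
  (forall W : seq T, resolving e sg W -> (k <= size W)%N).

(* The star K_{1,n}: vertex None is the centre, Some i (i < n) are the leaves. *)
Definition star_adj (n : nat) : rel (option 'I_n) :=
  fun u v => (u == None) != (v == None).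

Definition star_sign {n : nat} (s : 'I_n -> int) (u v : option 'I_n) : int :=
  match u, v with
  | None, Some i => s i
  | Some i, None => s i
  | _, _ => 1
  end.
Arguments star_adj n : clear implicits.

(* Main.v *)
Require Import Defs.
From mathcomp Require Import all_boot all_order all_algebra.
From mathcomp Require Import zify.
Import GRing.Theory Num.Theory.
Local Open Scope ring_scope.

Lemma exw_seq (T : finType) (e : rel T) x y k :
  reflect (exists p : seq T, size p = k /\ is_walk e x y p)
          [exists p : k.-tuple T, is_walk e x y p].
Proof.
apply: (iffP existsP) => [[p Hp]|[p [Hs Hp]]].
  by exists (val p); split => //; apply: size_tuple.
by subst k; exists (in_tuple p).
Qed.

Lemma gdistE (T : finType) (e : rel T) x y k : (k < #|T|)%N ->
  (exists p, size p = k /\ is_walk e x y p) ->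
  (forall p : seq T, (size p < k)%N -> ~~ is_walk e x y p) -> gdist e x y = k.
Proof.
move=> Hk Hex Hno; rewrite /gdist.
have -> : #|T| = (k + (#|T| - k))%N by rewrite subnKC // ltnW.
rewrite iotaD find_cat size_iota.
have -> : has (fun k0 => [exists p : k0.-tuple T, is_walk e x y p]) (iota 0 k) = false.
  apply/negbTE/hasPn => m; rewrite mem_iota add0n => /andP[_ Hm].
  apply/exw_seq => -[p [Hs Hw]].
  by move: (Hno p); rewrite Hs Hm Hw => /(_ isT).
have : (0 < #|T| - k)%N by rewrite subn_gt0.
case: (#|T| - k)%N => // m _.
rewrite /= add0n.
have -> : [exists p : k.-tuple T, is_walk e x y p] by apply/exw_seq.
by rewrite addn0.
Qed.

Lemma sd_unique (T : finType) (e : rel T) sg u v (p0 : seq T) :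
  size p0 = gdist e u v -> is_walk e u v p0 ->
  (forall p, size p = size p0 -> is_walk e u v p -> p = p0) ->
  (walk_sign sg u p0 = 1 \/ walk_sign sg u p0 = -1) ->
  signed_dist e sg u v = walk_sign sg u p0 * (size p0)%:Z.
Proof.
rewrite /signed_dist /sigma_max => Hs Hw Hu Hsg; rewrite -Hs.
case: ifP => H.
  by move/forallP: H => /(_ (in_tuple p0)) /implyP /(_ Hw) /eqP ->.
case: Hsg => [-> //|Hm]; exfalso.
move/negbT: H => /forallPn [p]; rewrite negb_imply => /andP [Hwp Hne].
have Ep := Hu p (size_tuple p) Hwp.
by move: Hne; rewrite Ep Hm eqxx.
Qed.

Lemma map_eq_in (A B : eqType) (f g : A -> B) (s : seq A) w :
  w \in s -> map f s = map g s -> f w = g w.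
Proof.
elim: s => //= a s IH; rewrite in_cons => /orP[/eqP->|H] [E1 E2]; auto.
Qed.

Section Star.
Variables (n : nat) (s : 'I_n -> int).
Hypothesis Hn : (3 <= n)%N.
Hypothesis Hs : forall i, s i = 1 \/ s i = -1.

Let T := option 'I_n.
Let sd := signed_dist (star_adj n) (star_sign s).

Lemma cardT : #|{: T}| = n.+1.
Proof. by rewrite card_option card_ord. Qed.

Lemma sd_xx x : sd x x = 0.
Proof.
rewrite /sd (@sd_unique _ _ _ _ _ [::]) /=.
- by rewrite mulr0.
- symmetry; apply: gdistE => //; first by rewrite cardT.
  by exists [::]; rewrite /is_walk /=.
- by rewrite /is_walk /=.
- by case.
- by left; rewrite /walk_sign big_nil.
Qed.

Lemma sd_cl i : sd None (Some i) = s i.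
Proof.
rewrite /sd (@sd_unique _ _ _ _ _ [:: Some i]) /=.
- by rewrite /walk_sign /= big_cons big_nil /= !mulr1.
- symmetry; apply: gdistE => //; first by rewrite cardT; lia.
  by exists [:: Some i]; rewrite /is_walk /=.
  by case.
- by rewrite /is_walk /=.
- by case=> // a [|//] _; rewrite /is_walk /= => /andP[_ /eqP->].
- by rewrite /walk_sign /= big_cons big_nil /= !mulr1; case: (Hs i) => ->; auto.
Qed.

Lemma sd_lc i : sd (Some i) None = s i.
Proof.
rewrite /sd (@sd_unique _ _ _ _ _ [:: None]) /=.
- by rewrite /walk_sign /= big_cons big_nil /= !mulr1.
- symmetry; apply: gdistE => //; first by rewrite cardT; lia.
  by exists [:: None]; rewrite /is_walk /=.
  by case.
- by rewrite /is_walk /=.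
- by case=> // a [|//] _; rewrite /is_walk /= => /andP[_ /eqP->].
- by rewrite /walk_sign /= big_cons big_nil /= !mulr1; case: (Hs i) => ->; auto.
Qed.

Lemma sd_ll i j : i != j -> sd (Some i) (Some j) = s i * s j * 2.
Proof.
move=> Hij.
rewrite /sd (@sd_unique _ _ _ _ _ [:: None; Some j]) /=.
- by rewrite /walk_sign /= !big_cons big_nil /= mulr1.
- symmetry; apply: gdistE => //; first by rewrite cardT; lia.
    by exists [:: None; Some j]; rewrite /is_walk /=.
  case=> [|a [|//]] _; first by rewrite /is_walk /= (inj_eq Some_inj).
  rewrite /is_walk /=; apply/negP => /andP [/andP [H _] /eqP E]; subst a.
  by move: H; rewrite /star_adj.
- by rewrite /is_walk /=.
- case=> // a [|b [|//]] // _; rewrite /is_walk /= => /andP[/andP[H _] /eqP->].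
  by case: a H.
- rewrite /walk_sign /= !big_cons big_nil /= mulr1.
  by case: (Hs i) (Hs j) => -> [] ->; auto.
Qed.

End Star.

Theorem theorem2p9 (n : nat) (s : 'I_n -> int) :
  (3 <= n)%N ->
  (forall i, s i = 1 \/ s i = -1) ->
  (exists i, s i = 1) -> (exists j, s j = -1) ->
  is_metric_dim (star_adj n) (star_sign s) (n - 2)%N.
Proof.
move=> Hn Hs [i0 Hi0] [j0 Hj0].
have sd_xx := @sd_xx n s.
have sd_cl := @sd_cl n s Hn Hs.
have sd_lc := @sd_lc n s Hn Hs.
have sd_ll := @sd_ll n s Hn Hs.
split.
- have hij : i0 != j0.
    by apply/eqP => E; move: Hj0; rewrite -E Hi0.
  pose S := [set k | (k != i0) && (k != j0)].
  have cS : #|S| = (n - 2)%N.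
    have -> : S = ~: [set i0; j0] by apply/setP => k; rewrite !inE negb_or.
    have := cardsC [set i0; j0]; rewrite cards2 hij card_ord; lia.
  have [k0 Hk0] : exists k0, k0 \in S.
    have : (0 < #|S|)%N by rewrite cS; lia.
    by rewrite card_gt0 => /set0Pn.
  have sk0 : s k0 != 0 by case: (Hs k0) => ->.
  exists (map Some (enum S)); split; last by rewrite size_map -cardE.
  split; first by rewrite map_inj_uniq ?enum_uniq //; apply: Some_inj.
  move=> u v Huv Heq; move/eqP: Huv; apply.
  have key : forall w, w \in S -> signed_dist (star_adj n) (star_sign s) u (Some w)
                              = signed_dist (star_adj n) (star_sign s) v (Some w).
    move=> w Hw; apply: (proj2 (eq_in_map _ _ _) Heq).
    by rewrite mem_map ?mem_enum //; apply: Some_inj.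
  clear Heq; case: u v key => [k|] [l|] key //.
  + case: (eqVneq k l) => [->//|kl]; exfalso.
    case: (boolP (k \in S)) => kS.
      have := key k kS; rewrite sd_xx sd_ll 1?eq_sym //.
      by case: (Hs k) => ->; case: (Hs l) => ->.
    case: (boolP (l \in S)) => lS.
      have := key l lS; rewrite sd_xx sd_ll //.
      by case: (Hs k) => ->; case: (Hs l) => ->.
    have kk0 : k != k0 by apply: contraNneq kS => ->.
    have lk0 : l != k0 by apply: contraNneq lS => ->.
    have := key k0 Hk0; rewrite !sd_ll //.
    move: kS lS; rewrite !inE !negb_and !negbK.
    case/orP => /eqP Ek; case/orP => /eqP El; subst k l; rewrite ?eqxx in kl => //;
      rewrite Hi0 Hj0; case: (Hs k0) => -> //.
  + exfalso; case: (boolP (k \in S)) => kS.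
      have := key k kS; rewrite sd_xx sd_cl.
      by case: (Hs k) => ->.
    have kk0 : k != k0 by apply: contraNneq kS => ->.
    have := key k0 Hk0; rewrite sd_ll // sd_cl.
    by case: (Hs k) => ->; case: (Hs k0) => ->.
  + exfalso; case: (boolP (l \in S)) => lS.
      have := key l lS; rewrite sd_xx sd_cl.
      by case: (Hs l) => ->.
    have lk0 : l != k0 by apply: contraNneq lS => ->.
    have := key k0 Hk0; rewrite sd_ll // sd_cl.
    by case: (Hs l) => ->; case: (Hs k0) => ->.
- move=> W [Wu Wr].
  set A := [set i | Some i \in W].
  have HO : (#|~: A| <= 2)%N.
    have inj : {in ~: A &, injective (fun i => s i == 1)}.
      move=> i j; rewrite !inE => Hi Hj Heq.
      case: (eqVneq i j) => // Hne; exfalso.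
      have Hsij : s i = s j by case: (Hs i) (Hs j) Heq => -> [] -> //=.
      apply: (Wr (Some i) (Some j)); first by apply/eqP => -[]; apply/eqP.
      rewrite /metric_rep; apply/eq_in_map => -[k|] Hk.
        have ki : i != k by apply: contraNneq Hi => ->.
        have kj : j != k by apply: contraNneq Hj => ->.
        by rewrite !sd_ll // Hsij.
      by rewrite !sd_lc Hsij.
    rewrite -(card_in_imset inj).
    by apply: leq_trans (max_card _) _; rewrite card_bool.
  have HA : (#|A| <= size W)%N.
    rewrite -(card_imset _ (@Some_inj _)) -(card_uniqP Wu).
    apply: subset_leq_card; apply/subsetP => x /imsetP [i]; rewrite inE => Hi ->.
    exact: Hi.
  have := cardsC A; rewrite card_ord.
  lia.
Qed.
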